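(* Let $H$ be a real Hilbert space, $C\subseteq H$ nonempty, $\varphi:[0,\infty)\to[0,\infty)$ an increasing function vanishing only at $0$, and $A:H\to2^H$ a maximally monotone operator which is uniformly monotone on $C$ with modulus $\varphi$. Let $\gamma>0$ be such that $J_{\gamma A}(C)\subseteq C$. Then $J_{\gamma A}$ is uniformly firmly nonexpansive on $C$ with modulus $\gamma\varphi$.
   Context: $J_{\gamma A}:=(id_H+\gamma A)^{-1}$ (single-valued on $H$). $A$ is uniformly monotone on $C$ with modulus $\varphi$ if for all $x,y\in C$ and $u\in A(x)$, $v\in A(y)$: $\langle x-y,u-v\rangle\ge\varphi(\|x-y\|)$. A map $T$ is uniformly firmly nonexpansive on $C$ with modulus $\phi$ if $T(C)\subseteq C$ and for all $x,y\in C$, $t\in[0,1]$: $\|Tx-Ty\|^2\le\|((1-t)x+tTx)-((1-t)y+tTy)\|^2-2(1-t)\phi(\|Tx-Ty\|)$. *)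

(* Defs.v *)
(* A real Hilbert space is modelled as a complete
   normed module H over a realType R, equipped with an inner product [ip]
   that induces its norm. *)
From HB Require Import structures.
From mathcomp Require Import all_boot all_order all_algebra.
From mathcomp Require Import all_classical all_reals all_analysis.
Set Implicit Arguments. Unset Strict Implicit. Unset Printing Implicit Defensive.
Import Order.TTheory GRing.Theory Num.Theory.
Import numFieldNormedType.Exports.
Local Open Scope classical_set_scope.
Local Open Scope ring_scope.

Section Defs.
Context {R : realType} {H : normedModType R}.

Definition is_inner_product (ip : H -> H -> R) : Prop :=
  [/\ (forall x y, ip x y = ip y x),
      (forall a x y z, ip (a *: x + y) z = a * ip x z + ip y z) &
      (forall x, ip x x = `|x| ^+ 2)].

Definition monotone_op (ip : H -> H -> R) (A : H -> set H) : Prop :=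
  forall x y u v, A x u -> A y v -> 0 <= ip (x - y) (u - v).

Definition maximally_monotone (ip : H -> H -> R) (A : H -> set H) : Prop :=
  monotone_op ip A /\
  forall B : H -> set H, monotone_op ip B ->
    (forall x u, A x u -> B x u) -> forall x u, B x u -> A x u.

Definition uniformly_monotone_on (ip : H -> H -> R) (A : H -> set H)
    (C : set H) (phi : R -> R) : Prop :=
  forall x y u v, C x -> C y -> A x u -> A y v ->
    phi `|x - y| <= ip (x - y) (u - v).

(* J is the resolvent J_{gamma A} = (id + gamma A)^{-1}, as a single-valued
   map on all of H:  J x = p  iff  x \in p + gamma A p. *)
Definition is_resolvent (A : H -> set H) (gamma : R) (J : H -> H) : Prop :=
  forall x p, J x = p <-> exists2 u, A p u & x = p + gamma *: u.

Definition uniformly_firmly_nonexpansive_on (T : H -> H) (C : set H)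
    (phi : R -> R) : Prop :=
  (forall x, C x -> C (T x)) /\
  forall x y t, C x -> C y -> 0 <= t <= 1 ->
    `|T x - T y| ^+ 2 <=
      `|((1 - t) *: x + t *: T x) - ((1 - t) *: y + t *: T y)| ^+ 2
      - 2 * (1 - t) * phi `|T x - T y|.

End Defs.

(* Main.v *)
Require Import Defs.
From HB Require Import structures.
From mathcomp Require Import all_boot all_order all_algebra.
From mathcomp Require Import all_classical all_reals all_analysis.
From mathcomp Require Import ring lra.
Import Order.TTheory GRing.Theory Num.Theory.
Import numFieldNormedType.Exports.
Local Open Scope classical_set_scope.
Local Open Scope ring_scope.

Theorem proposition4p8 (R : realType) (H : completeNormedModType R)
  (ip : H -> H -> R) (A : H -> set H) (C : set H) (phi : R -> R)
  (gamma : R) (J : H -> H) :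
  is_inner_product ip ->
  C !=set0 ->
  (forall t, 0 <= t -> 0 <= phi t) ->
  (forall s t, 0 <= s -> s <= t -> phi s <= phi t) ->
  (forall t, 0 <= t -> (phi t = 0 <-> t = 0)) ->
  maximally_monotone ip A ->
  uniformly_monotone_on ip A C phi ->
  0 < gamma ->
  is_resolvent A gamma J ->
  (forall x, C x -> C (J x)) ->
  uniformly_firmly_nonexpansive_on J C (fun t => gamma * phi t).
Proof.
move=> [ipC ipL ipN] _ _ _ _ _ UM g0 RJ CJ; split => // x y t Cx Cy /andP[t0 t1].
have ip0 : forall z, ip 0 z = 0.
  move=> z; have := ipL 1 0 0 z; rewrite scale1r !addr0 mul1r => h.
  by apply: (@addrI _ (ip 0 z)); rewrite addr0 -h.
have ipD : forall a b z, ip (a + b) z = ip a z + ip b z.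
  by move=> a b z; rewrite -[a in LHS]scale1r ipL mul1r.
have ipZ : forall c a z, ip (c *: a) z = c * ip a z.
  by move=> c a z; rewrite -[_ *: a]addr0 ipL ip0 addr0.
have ipDr : forall a b z, ip z (a + b) = ip z a + ip z b.
  by move=> a b z; rewrite ipC ipD ![ip _ z]ipC.
have ipZr : forall c a z, ip z (c *: a) = c * ip z a.
  by move=> c a z; rewrite ipC ipZ ipC.
have [u Au xE] := (RJ x (J x)).1 erefl.
have [v Av yE] := (RJ y (J y)).1 erefl.
have Hm := UM _ _ _ _ (CJ _ Cx) (CJ _ Cy) Au Av.
set p := J x in xE Hm *; set q := J y in yE Hm *.
set a := p - q; set w := gamma *: (u - v); set s := 1 - t.
have -> : (1 - t) *: x + t *: p - ((1 - t) *: y + t *: q) = a + s *: w.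
  have E : forall z c : H, (1 - t) *: (z + gamma *: c) + t *: z = z + (1 - t) *: (gamma *: c).
    by move=> z c; rewrite scalerDr addrAC -scalerDl subrK scale1r.
  rewrite xE yE !E /a /w /s scalerBr scalerBr;
  by rewrite opprD addrACA.
have key : forall a0 w0 : H, ip (a0 + s *: w0) (a0 + s *: w0) =
    ip a0 a0 + 2 * s * ip a0 w0 + s ^+ 2 * ip w0 w0.
  move=> a0 w0; rewrite ipD !ipDr !ipZ !ipZr (ipC w0 a0); ring.
rewrite -!ipN key.
have hw : 0 <= ip w w by rewrite ipN sqr_ge0.
have haw : gamma * phi `|a| <= ip a w by rewrite /w ipZr ler_pM2l.
have s0 : 0 <= s by rewrite /s subr_ge0.
move: hw haw s0; clearbody a w s.
move: (ip a a) (ip a w) (ip w w) (gamma * phi `|a|) => P Q W F hw haw s0.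
have h : 0 <= s * (2 * (Q - F)) + s * s * W.
  by rewrite addr_ge0 ?mulr_ge0 ?subr_ge0.
rewrite -subr_ge0; move: h; congr (_ <= _); ring.
Qed.
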